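(* Let $G$ be a finite transitive permutation group whose point stabilizers have order $2$. Then $G$ has the EKR property if and only if $$\sum_{\chi}\frac{\chi(g)^3}{\chi(1)}=0,$$ where $\chi$ runs through the set of all complex irreducible characters of $G$ and $g$ is any non-identity element of $G$ fixing a point.
   Context: For a permutation group $G$ on a finite set $V$, a subset $\mathcal{F}\subseteq G$ is intersecting if for all $g,h\in\mathcal{F}$ there is $v\in V$ with $g(v)=h(v)$. $G$ has the Erdős–Ko–Rado (EKR) property if the maximum size of an intersecting set of $G$ equals the maximum order of a point stabilizer $G_v$, $v\in V$. *)

(* Defs.v *)
From mathcomp Require Import all_boot all_order all_algebra all_fingroup all_solvable all_field all_character.
Set Implicit Arguments. Unset Strict Implicit. Unset Printing Implicit Defensive.

Definition intersecting (V : finType) (F : {set {perm V}}) : bool :=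
  [forall g in F, forall h in F, exists v : V, g v == h v].

Definition EKR (V : finType) (G : {group {perm V}}) : Prop :=
  \max_(F : {set {perm V}} | (F \subset G) && intersecting F) #|F|
  = \max_(v : V) #|('C_G[v | 'P])%g|.

(* Main.v *)
Require Import Defs.
From mathcomp Require Import all_boot all_order all_algebra all_fingroup all_solvable all_field all_character.
Import GRing.Theory Num.Theory.
Local Open Scope ring_scope.

Lemma char_sum_eq0 (gT : finGroupType) (G : {group gT}) (g : gT) :
  g \in G -> (g^-1 \in g ^: G)%g ->
  (\sum_(i < Nirr G) ('chi[G]_i g) ^+ 3 / 'chi[G]_i 1%g == 0) =
  (gring_classM_coef_set (g ^: G) (g ^: G) g == set0)%g.
Proof.
move=> Gg gVG.
have clG := mem_classes Gg.
pose k := enum_rank_in clG (g ^: G)%g.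
have Dk : enum_val k = (g ^: G)%g by rewrite enum_rankK_in.
have Kg : g \in enum_val k by rewrite Dk class_refl.
have := gring_classM_coef_sum_eq Kg Kg Kg.
rewrite (set_gring_classM_coef _ _ Kg) Dk /=.
have ->: \sum_i 'chi[G]_i g * 'chi_i g * ('chi_i g)^* / 'chi_i 1%g
        = \sum_(i < Nirr G) ('chi[G]_i g) ^+ 3 / 'chi[G]_i 1%g.
  apply: eq_bigr => i _.
  have [u Gu Eu] := imsetP gVG.
  rewrite -irr_inv Eu cfunJ // -!mulrA; congr (_ * _); rewrite !exprS expr0 mulr1 !mulrA //.
move=> E.
rewrite -cards_eq0 -(eqr_nat algC) E mulf_eq0 mulf_eq0 invr_eq0 (negPf (neq0CG G)).
rewrite pnatr_eq0 muln_eq0 orbb cards_eq0 orbF.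
have -> : (g ^: G == set0)%g = false by apply/negP=> /eqP E0; have := class_refl G g; rewrite E0 inE.
by [].
Qed.

Lemma int3 (V : finType) (a b c : {perm V}) (v1 v2 v3 : V) :
  a v1 = b v1 -> a v2 = c v2 -> b v3 = c v3 -> intersecting [set a; b; c].
Proof.
move=> e1 e2 e3.
have H z : z \in [set a; b; c] -> [\/ z = a, z = b | z = c].
  by rewrite !inE => /orP[/orP[/eqP|/eqP]|/eqP] ->; [constructor 1|constructor 2|constructor 3].
apply/forallP => x; apply/implyP => /H Hx.
apply/forallP => y; apply/implyP => /H Hy; apply/existsP.
case: Hx => ->; case: Hy => ->;
  by [exists v1; rewrite ?e1 | exists v2; rewrite ?e2 | exists v3; rewrite ?e3].
Qed.

Section Main.
Variables (V : finType) (G : {group {perm V}}).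
Hypothesis Htrans : [transitive G, on [set: V] | 'P].
Hypothesis Hstab : forall v : V, #|('C_G[v | 'P])%g| = 2%N.

Lemma inC (v : V) (g : {perm V}) : (g \in 'C_G[v | 'P])%g = (g \in G) && (g v == v).
Proof.
rewrite inE; congr (_ && _); apply/astab1P/eqP => //=.
Qed.

Lemma stab_uniq (v : V) (g h : {perm V}) : (g \in 'C_G[v | 'P])%g -> (h \in 'C_G[v | 'P])%g ->
  g != 1%g -> h != 1%g -> g = h.
Proof.
move=> gC hC g1 h1.
have := Hstab v; rewrite (cardsD1 1%g) group1 add1n => /eqP; rewrite eqSS.
move/cards1P => [t Et].
have : g \in ('C_G[v | 'P] :\ 1)%g by rewrite in_setD1 g1 gC.
have : h \in ('C_G[v | 'P] :\ 1)%g by rewrite in_setD1 h1 hC.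
by rewrite Et !inE => /eqP-> /eqP->.
Qed.

Lemma conj_fix (g h : {perm V}) (v w : V) : g \in G -> h \in G -> g != 1%g -> h != 1%g ->
  g v = v -> h w = w -> (h \in g ^: G)%g.
Proof.
move=> Gg Gh g1 h1 gv hw.
have [k Gk Ew] := atransP2 Htrans (in_setT v) (in_setT w).
rewrite /= apermE in Ew.
have E : g = (h ^ k^-1)%g.
  apply: (@stab_uniq v); rewrite ?inC ?Gg ?gv ?eqxx //.
    rewrite groupJ ?groupV //=; apply/eqP.
    by rewrite /conjg invgK !permM -Ew hw Ew permK.
  by rewrite conjg_eq1.
by apply/imsetP; exists k => //; rewrite E conjgKV.
Qed.

Lemma class_fix (g h : {perm V}) (v : V) : g v = v -> (h \in g ^: G)%g -> exists w, h w = w.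
Proof.
move=> gv /imsetP[k Gk ->]; exists (k v).
by rewrite /conjg !permM permK gv.
Qed.

End Main.

Theorem proposition3p4 (V : finType) (G : {group {perm V}})
  (Htrans : [transitive G, on [set: V] | 'P])
  (Hstab : forall v : V, #|('C_G[v | 'P])%g| = 2%N) :
  EKR G <->
  (forall g : {perm V}, g \in G -> g != 1%g -> (exists v : V, g v = v) ->
     \sum_(i < Nirr G) ('chi[G]_i g) ^+ 3 / 'chi[G]_i 1%g = 0).
Proof.
have inC' := @inC V G.
have conjF := @conj_fix V G Htrans Hstab.
have classF := @class_fix V G.
set L := \max_(F : {set {perm V}} | (F \subset G) && intersecting F) #|F|.
set M := \max_(v : V) #|('C_G[v | 'P])%g|.
have Cint v : intersecting ('C_G[v | 'P])%g.
  apply/forallP => x; apply/implyP; rewrite inC' => /andP[_ /eqP xv].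
  apply/forallP => y; apply/implyP; rewrite inC' => /andP[_ /eqP yv].
  by apply/existsP; exists v; rewrite xv yv.
have ML : (M <= L)%N.
  apply/bigmax_leqP => v _; apply: (leq_bigmax_cond ('C_G[v | 'P])%g).
  by rewrite subsetIl Cint.
have M2 : (M <= 2)%N by apply/bigmax_leqP => v _; rewrite Hstab.
split.
- move=> EKRG g Gg g1 [v gv].
  have gVG : (g^-1 \in g ^: G)%g.
    apply: (conjF _ _ v v) => //; rewrite ?groupV ?invg_eq1 //.
    by rewrite -{1}gv permK.
  apply/eqP; rewrite char_sum_eq0 //; apply/eqP/setP => -[x y].
  rewrite !inE /=; apply/negP => /andP[/andP[xC yC] /eqP xy].
  have [wx xw] := classF _ _ _ gv xC.
  have [wy yw] := classF _ _ _ gv yC.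
  have x1 : x != 1%g.
    by case/imsetP: xC => k _ ->; rewrite conjg_eq1.
  have y1 : y != 1%g.
    by case/imsetP: yC => k _ ->; rewrite conjg_eq1.
  have yg : y != g.
    by apply: contra x1 => /eqP Eyg; rewrite -Eyg in xy; apply/eqP; apply: (mulIg y); rewrite mul1g.
  have Gy : y \in G.
    by case/imsetP: yC => k Gk ->; rewrite groupJ.
  have FI : intersecting [set 1%g; y; g].
    apply: (@int3 V 1%g y g wy v wx); rewrite ?perm1 ?yw ?gv //.
    by rewrite -xy permM xw.
  have FG : [set 1%g; y; g] \subset G.
    by apply/subsetP => z; rewrite !inE => /orP[/orP[/eqP->|/eqP->]|/eqP->] //; apply: group1.
  have F3 : #|[set 1%g; y; g]| = 3%N.
    rewrite setUC !cardsU1 cards1 !inE.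
    by rewrite (negPf g1) [g == y]eq_sym (negPf yg) [1%g == y]eq_sym (negPf y1).
  have : (3 <= L)%N by rewrite -F3; apply: (leq_bigmax_cond [set 1%g; y; g]); rewrite FG FI.
  have EL : L = M by exact: EKRG.
  by rewrite EL => /leq_trans/(_ M2).
- move=> H; rewrite /EKR -/L -/M; apply/eqP; rewrite eqn_leq ML andbT.
  apply/bigmax_leqP => F /andP[FG Fint].
  have [F2|F3] := leqP #|F| 2%N.
    have [F0|/set0Pn[a aF]] := eqVneq F set0; first by rewrite F0 cards0.
    have /forallP/(_ a)/implyP/(_ aF)/forallP/(_ a)/implyP/(_ aF)/existsP[v _] := Fint.
    apply: leq_trans F2 _; rewrite -(Hstab v); exact: (leq_bigmax_cond v).
  exfalso.
  have agree p q : p \in F -> q \in F -> exists v, p v = q v.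
    move=> pF qF.
    by have /forallP/(_ p)/implyP/(_ pF)/forallP/(_ q)/implyP/(_ qF)/existsP[v /eqP e] := Fint; exists v.
  have [a aF] : exists a, a \in F.
    by apply/set0Pn; rewrite -card_gt0; apply: leq_trans F3.
  have [b] : exists b, b \in F :\ a.
    apply/set0Pn; rewrite -card_gt0.
    by move: F3; rewrite (cardsD1 a) aF add1n ltnS; apply: leq_trans.
  rewrite in_setD1 => /andP[ba bF].
  have [c] : exists c, c \in F :\ a :\ b.
    apply/set0Pn; rewrite -card_gt0.
    by move: F3; rewrite (cardsD1 a) aF (cardsD1 b) in_setD1 ba bF !add1n !ltnS.
  rewrite !in_setD1 => /and3P[cb ca cF].
  have [v1 e1] := agree _ _ aF bF.
  have [v2 e2] := agree _ _ aF cF.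
  have [v3 e3] := agree _ _ bF cF.
  have Ga := subsetP FG _ aF; have Gb := subsetP FG _ bF; have Gc := subsetP FG _ cF.
  set X := (b * a^-1)%g; set Y := (c * b^-1)%g; set Z := (c * a^-1)%g.
  have GX : X \in G by rewrite groupM ?groupV.
  have GY : Y \in G by rewrite groupM ?groupV.
  have GZ : Z \in G by rewrite groupM ?groupV.
  have X1 : X != 1%g by rewrite -eq_mulgV1.
  have Y1 : Y != 1%g by rewrite -eq_mulgV1.
  have Z1 : Z != 1%g by rewrite -eq_mulgV1.
  have Xv : X v1 = v1 by rewrite permM -e1 permK.
  have Yv : Y v3 = v3 by rewrite permM -e3 permK.
  have Zv : Z v2 = v2 by rewrite permM -e2 permK.
  have ZVG : (Z^-1 \in Z ^: G)%g.
    apply: (conjF _ _ v2 v2) => //; rewrite ?groupV ?invg_eq1 //.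
    by rewrite -{1}Zv permK.
  have := H Z GZ Z1 (ex_intro _ v2 Zv).
  move/eqP; rewrite char_sum_eq0 // => /eqP/setP/(_ (Y, X)).
  rewrite !inE /= (conjF _ _ v2 v3) ?(conjF _ _ v2 v1) //=.
  by rewrite /X /Y /Z -mulgA mulKg eqxx.
Qed.
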